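(* Let the words $C_n$, $D_n$ over $\{1,2\}$ be defined by $C_1=1$, $D_1=2$, $C_{k+1}=C_k\,1\,D_k$, $D_{k+1}=C_k\,2\,D_k$ for $k\ge 1$. Let $n\geq 1$ and $k\geq 1$. The number of occurrences of the subsequence $1^k$ in $C_n$ (i.e. the number of $k$-element sets of positions of $C_n$ all carrying the letter $1$) is $\binom{2^{n-1}}{k}$, and the number of occurrences of the subsequence $2^k$ in $C_n$ is $\binom{2^{n-1}-1}{k}$. Consequently the number of occurrences of the classical pattern $1^k=1\text{-}1\text{-}\cdots\text{-}1$ ($k$ letters) in $C_n$ (i.e. the number of $k$-element sets of positions of $C_n$ all carrying the same letter) equals $$\binom{2^{n-1}}{k}+\binom{2^{n-1}-1}{k},$$ and, provided $k\neq 2^{n-1}$, this equals $\frac{2^n-k}{2^{n-1}-k}\binom{2^{n-1}-1}{k}$.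
   Context: A subsequence occurrence of a word $u=u_1\cdots u_k$ in a word $w=w_1\cdots w_m$ is a choice of indices $i_1<\cdots<i_k$ with $w_{i_j}=u_j$ for all $j$. An occurrence of the (classical) pattern $1\text{-}1\text{-}\cdots\text{-}1$ of length $k$ is a choice of indices $i_1<\cdots<i_k$ such that $w_{i_1}=\cdots=w_{i_k}$. *)

(* Defs.v *)
From mathcomp Require Import all_boot all_algebra.
Set Implicit Arguments. Unset Strict Implicit. Unset Printing Implicit Defensive.

(* CD k = (C_{k+1}, D_{k+1}) *)
Fixpoint CD (k : nat) : seq nat * seq nat :=
  match k with
  | 0 => ([:: 1], [:: 2])
  | k'.+1 => let: (c, d) := CD k' in (c ++ 1 :: d, c ++ 2 :: d)
  end.

(* C_n for n >= 1 *)
Definition Cw (n : nat) : seq nat := (CD n.-1).1.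
Definition Dw (n : nat) : seq nat := (CD n.-1).2.

(* Number of subsequence occurrences of u in w: sets of positions i_1<...<i_k
   (listed increasingly by enum) with w_{i_j} = u_j. *)
Definition occ_subseq (w u : seq nat) : nat :=
  #|[set S : {set 'I_(size w)} |
      (#|S| == size u) && ([seq nth 0 w (val i) | i <- enum S] == u)]|.

Definition occ_const_pattern (w : seq nat) (k : nat) : nat :=
  #|[set S : {set 'I_(size w)} |
      (#|S| == k) && [exists a : 'I_(size w), [forall i in S, nth 0 w i == nth 0 w a]]]|.

(* Main.v *)
Require Import Defs.
From mathcomp Require Import all_boot all_algebra.
From mathcomp Require Import zify.

Lemma card_letter (w : seq nat) a :
  #|[set i : 'I_(size w) | nth 0 w i == a]| = count_mem a w.
Proof.
rewrite cardsE cardE /enum_mem size_filter.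
rewrite -[in RHS](mkseq_nth 0 w) /mkseq -val_enum_ord -map_comp count_map.
by rewrite enumT; apply: eq_count => i; rewrite !inE.
Qed.


Definition Aset (w : seq nat) a := [set i : 'I_(size w) | nth 0 w i == a].

Lemma occ_nseq (w : seq nat) a k :
  occ_subseq w (nseq k a) = 'C(count_mem a w, k).
Proof.
rewrite /occ_subseq -card_letter -cards_draws; apply: eq_card => S; rewrite !inE size_nseq.
case: (#|S| =P k) => [<-|]; last by rewrite andbF.
rewrite andbT cardE -(size_map (fun i : 'I_(size w) => nth 0 w i)).
apply/eqP/subsetP => [/all_pred1P H i iS|H].
  move: H; rewrite all_map => /allP; rewrite -mem_enum in iS => /(_ i iS); by rewrite /= inE.
apply/all_pred1P; rewrite all_map; apply/allP => i; rewrite mem_enum => iS; have := H i iS; by rewrite inE.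
Qed.

Lemma CD_counts j :
  [/\ count_mem 1 (CD j).1 = 2 ^ j, count_mem 2 (CD j).1 = 2 ^ j - 1,
      count_mem 1 (CD j).2 = 2 ^ j - 1, count_mem 2 (CD j).2 = 2 ^ j
    & all (fun x => (x == 1) || (x == 2)) ((CD j).1 ++ (CD j).2)].
Proof.
elim: j => [|j]; first by [].
rewrite /=; case: (CD j) => c d /= [h1 h2 h3 h4 ha].
have p : 0 < 2 ^ j by rewrite expn_gt0.
rewrite !count_cat /= h1 h2 h3 h4 expnS !all_cat /= -!andbA.
move: ha; rewrite all_cat => /andP[-> ->] /=.
split; lia.
Qed.

Lemma occ_const (w : seq nat) k : 0 < k -> all (fun x => (x == 1) || (x == 2)) w ->
  occ_const_pattern w k = 'C(count_mem 1 w, k) + 'C(count_mem 2 w, k).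
Proof.
move=> k0 hw.
have key : forall S : {set 'I_(size w)}, 0 < #|S| ->
  [exists a : 'I_(size w), [forall i in S, nth 0 w i == nth 0 w a]] =
  (S \subset Aset w 1) || (S \subset Aset w 2).
  move=> S /card_gt0P [x xS].
  apply/existsP/orP => [[a /forall_inP Ha]|].
    have : nth 0 w a \in w by apply: mem_nth.
    move/allP: hw => hw /hw /orP [/eqP e|/eqP e]; [left|right];
      apply/subsetP => i iS; rewrite inE -e; exact: Ha.
  move=> [] /subsetP H; exists x; apply/forall_inP => i iS;
    have := H i iS; have := H x xS; rewrite !inE => /eqP -> /eqP ->.
    done. done.
rewrite /occ_const_pattern -!card_letter -!cards_draws.
rewrite (_ : [set S | _] = [set S : {set 'I_(size w)} | S \subset Aset w 1 & #|S| == k]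
   :|: [set S : {set 'I_(size w)} | S \subset Aset w 2 & #|S| == k]).
  rewrite cardsU (_ : _ :&: _ = set0) ?cards0 ?subn0 //.
  apply/setP => S; rewrite !inE.
  case: (#|S| =P k) => [Sk|]; last by rewrite !andbF.
  have : 0 < #|S| by rewrite Sk.
  move=> /card_gt0P [x xS]; rewrite !andbT.
  apply/negP => /andP [/subsetP /(_ x xS)] + /subsetP /(_ x xS).
  by rewrite !inE => /eqP ->.
apply/setP => S; rewrite !inE.
case: (#|S| =P k) => [Sk|]; last by rewrite !andbF.
rewrite !andbT key // Sk //.
Qed.

From mathcomp Require Import ring.
Import GRing.Theory Num.Theory.
Local Open Scope ring_scope.

Lemma rat_part (m k : nat) : k <> m ->
  (('C(m, k) + 'C(m - 1, k))%N%:R : rat) =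
   ((2 * m)%N%:R - k%:R) / (m%:R - k%:R) * ('C(m - 1, k))%:R.
Proof.
move=> km.
case: (ltnP m k) => [mk|km'].
  by rewrite (bin_small mk) (@bin_small (m - 1)); [rewrite mulr0 | lia].
have mk : (k < m)%N by rewrite ltn_neqAle km' andbT; apply/eqP => e; apply: km.
have h := mul_bin_down m k; rewrite -subn1 in h.
have d : (m%:R - k%:R : rat) != 0.
  by rewrite -natrB ?(ltnW mk) // pnatr_eq0 subn_eq0 -ltnNge.
have e0 : ('C(m, k)%:R : rat) = m%:R * ('C(m - 1, k))%:R / (m%:R - k%:R).
  rewrite -natrM h natrM natrB ?(ltnW mk) //.
  by rewrite mulrAC divff ?mul1r // -natrB ?(ltnW mk).
rewrite natrD e0 natrM.
field; exact: d.
Qed.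

Theorem proposition2 (n k : nat) (hn : (1 <= n)%N) (hk : (1 <= k)%N) :
  [/\ occ_subseq (Cw n) (nseq k 1%N) = 'C(2 ^ n.-1, k),
      occ_subseq (Cw n) (nseq k 2%N) = 'C(2 ^ n.-1 - 1, k),
      occ_const_pattern (Cw n) k = ('C(2 ^ n.-1, k) + 'C(2 ^ n.-1 - 1, k))%N
    & k <> (2 ^ n.-1)%N ->
      (occ_const_pattern (Cw n) k)%:R =
        ((2 ^ n)%:R - k%:R) / ((2 ^ n.-1)%:R - k%:R) * ('C(2 ^ n.-1 - 1, k))%:R
        :> rat].
Proof.
have [h1 h2 _ _ ha] := CD_counts n.-1.
have hc : occ_const_pattern (Cw n) k = ('C(2 ^ n.-1, k) + 'C(2 ^ n.-1 - 1, k))%N.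
  rewrite occ_const //; first by rewrite /Cw h1 h2.
  by move: ha; rewrite all_cat /Cw => /andP[].
split => //; rewrite ?occ_nseq /Cw ?h1 ?h2 //.
move=> km; rewrite -/(Cw n) hc rat_part //.
by rewrite -expnS prednK.
Qed.
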